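(* Let $(M,d)$ be a metric space, $\mathsf{P}\subseteq M$ a set of $n$ points, and $1\le\ell\le k\le n$ integers with $\ell\mid k$; put $m=k/\ell$. Let $Q=\{q_1,\dots,q_m\}$ be the output of Gonzalez's algorithm on $\mathsf{P}$ with $m$ centers, and let $C\subseteq\mathsf{P}$ with $|C|=k$ and $C\supseteq\bigcup_{i=1}^m N_{\mathsf{P}}(q_i,\ell)$. Then $\max_{p\in\mathsf{P}} d_C(p,\ell)\le 3\,r_{\mathrm{opt}}$, where $r_{\mathrm{opt}}=\min_{C'\subseteq\mathsf{P},|C'|=k}\max_{p\in\mathsf{P}} d_{C'}(p,\ell)$.
   Context: Gonzalez's algorithm with $m$ centers: $q_1\in\mathsf{P}$ is arbitrary, and for $i=2,\dots,m$, $q_i$ is a point of $\mathsf{P}$ maximizing $d(p,\{q_1,\dots,q_{i-1}\})$ over $p\in\mathsf{P}$. For a finite $S\subseteq M$ and $1\le i\le|S|$, $d_S(p,i)$ is the radius of the smallest closed ball centered at $p$ containing at least $i$ points of $S$; nearest neighbors are ordered lexicographically by $(d(p,s),\text{index of }s)$ and $N_S(p,i)$ is the set of the first $i$ points of $S$ in this order, $|N_S(p,i)|=i$. *)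

(* Defs.v *)
From HB Require Import structures.
From mathcomp Require Import all_boot all_order all_algebra.
Set Implicit Arguments. Unset Strict Implicit. Unset Printing Implicit Defensive.
Import Order.TTheory GRing.Theory Num.Theory.
Local Open Scope ring_scope.

(* The point set P is given as an injective map P : 'I_n -> M; the "index"
   of a point P s is s.  Subsets of P are sets of indices {set 'I_n}. *)

Definition is_metric (R : realFieldType) (M : Type) (d : M -> M -> R) : Prop :=
  [/\ forall x y, 0 <= d x y,
      forall x y, d x y = 0 <-> x = y,
      forall x y, d x y = d y x
    & forall x y z, d x z <= d x y + d y z].

Definition ball_count (R : realFieldType) (M : Type) (d : M -> M -> R)
  (n : nat) (P : 'I_n -> M) (S : {set 'I_n}) (x : M) (r : R) : nat :=
  #|[set t in S | d x (P t) <= r]|.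

(* d_S(x,i): radius of the smallest closed ball centred at x containing at
   least i points of S.  The smallest such radius is always one of the
   distances d x s (s in S), so it is the minimum of those distances r for
   which the ball of radius r contains >= i points of S.  The default value
   (max distance to S) is itself such a candidate when i <= #|S|. *)
Definition dS (R : realFieldType) (M : Type) (d : M -> M -> R)
  (n : nat) (P : 'I_n -> M) (S : {set 'I_n}) (x : M) (i : nat) : R :=
  \big[Num.min/ \big[Num.max/0]_(s in S) d x (P s)]_(s in S |
      (i <= ball_count d P S x (d x (P s)))%N) d x (P s).

Definition nn_lt (R : realFieldType) (M : Type) (d : M -> M -> R)
  (n : nat) (P : 'I_n -> M) (x : M) (t s : 'I_n) : bool :=
  (d x (P t) < d x (P s)) || ((d x (P t) == d x (P s)) && (t < s)%N).

(* N_S(x,i): the first i points of S in the above order. *)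
Definition NN (R : realFieldType) (M : Type) (d : M -> M -> R)
  (n : nat) (P : 'I_n -> M) (S : {set 'I_n}) (x : M) (i : nat) : {set 'I_n} :=
  [set s in S | (#|[set t in S | nn_lt d P x t s]| < i)%N].

(* d(x, {q_0, ..., q_{i-1}}) for i >= 1 (the default value d x (q 0) is one
   of the terms of the min, so it is harmless). *)
Definition dist_prefix (R : realFieldType) (M : Type) (d : M -> M -> R)
  (n : nat) (P : 'I_n -> M) (q : nat -> 'I_n) (i : nat) (x : M) : R :=
  \big[Num.min/ d x (P (q 0%N))]_(j < i) d x (P (q j)).

(* q_0, ..., q_{m-1} (0-based) is a possible run of Gonzalez's algorithm with
   m centers: q_0 arbitrary, q_i maximises d(p, {q_0..q_{i-1}}) over P. *)
Definition is_gonzalez (R : realFieldType) (M : Type) (d : M -> M -> R)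
  (n : nat) (P : 'I_n -> M) (m : nat) (q : nat -> 'I_n) : Prop :=
  forall i : nat, (0 < i < m)%N ->
    forall p : 'I_n, dist_prefix d P q i (P p) <= dist_prefix d P q i (P (q i)).

Definition cover_cost (R : realFieldType) (M : Type) (d : M -> M -> R)
  (n : nat) (P : 'I_n -> M) (C : {set 'I_n}) (l : nat) : R :=
  \big[Num.max/0]_(p : 'I_n) dS d P C (P p) l.

(* Main.v *)
Require Import Defs.
From HB Require Import structures.
From mathcomp Require Import all_boot all_order all_algebra.
From mathcomp Require Import lra zify.
Import Order.TTheory GRing.Theory Num.Theory.
Local Open Scope ring_scope.

Lemma bigmin_le_seq (R : realFieldType) (I : eqType) (r : seq I) (Pr : pred I)
  (F : I -> R) x0 i : i \in r -> Pr i ->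
  \big[Num.min/x0]_(j <- r | Pr j) F j <= F i.
Proof.
elim: r => // a r IH; rewrite inE big_cons; case/orP => [/eqP<-|ir] Pi.
  by rewrite Pi ge_min lexx.
case: (Pr a); last exact: IH.
by rewrite ge_min IH ?orbT.
Qed.

Lemma le_bigmax_seq (R : realFieldType) (I : eqType) (r : seq I) (Pr : pred I)
  (F : I -> R) x0 i : i \in r -> Pr i ->
  F i <= \big[Num.max/x0]_(j <- r | Pr j) F j.
Proof.
elim: r => // a r IH; rewrite inE big_cons; case/orP => [/eqP<-|ir] Pi.
  by rewrite Pi le_max lexx.
case: (Pr a); last exact: IH.
by rewrite le_max IH ?orbT.
Qed.

Lemma min_elt (T : finType) (lt : rel T) (A : {set T}) :
  (forall a b c, lt a b -> lt b c -> lt a c) -> (forall a, ~~ lt a a) ->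
  forall a0, a0 \in A -> exists2 s, s \in A & forall t, t \in A -> ~~ lt t s.
Proof.
move=> ltr irr a0 a0A.
case: (arg_minnP (fun s => #|[set t in A | lt t s]|) a0A) => s sA smin.
exists s => // t tA; apply/negP => lts.
have := smin t tA; apply/negP; rewrite -ltnNge.
apply: proper_card; apply/properP; split.
  apply/subsetP => u; rewrite !inE => /andP[-> ut] /=; exact: ltr ut lts.
by exists t; rewrite !inE ?tA ?lts ?irr.
Qed.

Section DS.
Variables (R : realFieldType) (M : Type) (d : M -> M -> R) (n : nat) (P : 'I_n -> M).

Lemma ball_mono (S : {set 'I_n}) x r1 r2 : r1 <= r2 ->
  (ball_count d P S x r1 <= ball_count d P S x r2)%N.
Proof.
move=> h; apply: subset_leq_card; apply/subsetP => t; rewrite !inE => /andP[-> /=].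
move=> h1; exact: le_trans h1 h.
Qed.

Lemma dS_ball (S : {set 'I_n}) x i : (i <= #|S|)%N ->
  (i <= ball_count d P S x (dS d P S x i))%N.
Proof.
move=> hi; rewrite /dS; apply: (big_ind (fun v => (i <= ball_count d P S x v)%N)).
- apply: (leq_trans hi); rewrite /ball_count; apply: subset_leq_card.
  apply/subsetP => t tS; rewrite inE tS /=.
  exact: le_bigmax_seq (mem_index_enum _) tS.
- by move=> a b ha hb; rewrite minEle; case: ifP.
- by move=> s /andP[].
Qed.

Lemma ball_dS (S : {set 'I_n}) x i r : (1 <= i)%N ->
  (i <= ball_count d P S x r)%N -> dS d P S x i <= r.
Proof.
move=> i1 hb.
have : (0 < #|[set t in S | (d x (P t) <= r)%R]|)%N by apply: leq_trans hb.
case/card_gt0P => a0 a0B.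
have [s sB smax] := @min_elt _ (fun a b => d x (P b) < d x (P a))
  _ (fun a b c h1 h2 => lt_trans h2 h1) (fun a => negbT (ltxx _)) _ a0B.
move: (sB); rewrite inE => /andP[sS sr].
apply: le_trans sr.
apply: bigmin_le_seq; first exact: mem_index_enum.
rewrite sS /=; apply: (leq_trans hb); apply: subset_leq_card.
apply/subsetP => t; rewrite !inE => /andP[tS tr]; rewrite tS /=.
have := smax t; rewrite !inE tS tr /= => /(_ isT); by rewrite -leNgt.
Qed.

End DS.


Lemma nn_lt_trans (R : realFieldType) (M : Type) (d : M -> M -> R) n (P : 'I_n -> M) x a b c :
  nn_lt d P x a b -> nn_lt d P x b c -> nn_lt d P x a c.
Proof.
rewrite /nn_lt => /orP[h1|/andP[/eqP e1 h1]] /orP[h2|/andP[/eqP e2 h2]].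
- by rewrite (lt_trans h1 h2).
- by rewrite -e2 h1.
- by rewrite e1 h2.
- by rewrite e1 e2 eqxx (ltn_trans h1 h2) orbT.
Qed.

Lemma nn_lt_irr (R : realFieldType) (M : Type) (d : M -> M -> R) n (P : 'I_n -> M) x a :
  ~~ nn_lt d P x a a.
Proof. by rewrite /nn_lt ltxx ltnn andbF. Qed.

Theorem mainTheorem11 (R : realFieldType) (M : Type) (d : M -> M -> R)
  (hd : is_metric d) (n : nat) (P : 'I_n -> M) (hP : injective P)
  (l k : nat) (hl : (1 <= l)%N) (hlk : (l <= k)%N) (hkn : (k <= n)%N)
  (hdiv : (l %| k)%N)
  (q : nat -> 'I_n) (hq : is_gonzalez d P (k %/ l) q)
  (C : {set 'I_n}) (hC : #|C| = k)
  (hCN : forall j : nat, (j < k %/ l)%N -> NN d P [set: 'I_n] (P (q j)) l \subset C) :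
  forall C' : {set 'I_n}, #|C'| = k ->
    cover_cost d P C l <= 3%:R * cover_cost d P C' l.
Proof.
move=> C' hC'.
case: hd => d0 deq dsym dtri.
set m := (k %/ l)%N in hq hCN.
have hm : (0 < m)%N by rewrite divn_gt0.
have hk : (m * l)%N = k by rewrite divnK.
set r := cover_cost d P C' l.
have hr : forall p : 'I_n, (l <= ball_count d P C' (P p) r)%N.
  move=> p; apply: leq_trans (@dS_ball _ _ d _ P C' (P p) l _) _.
    by rewrite hC'.
  apply: ball_mono; rewrite /r /cover_cost.
  exact: le_bigmax_seq (mem_index_enum _) _.
have hn : (0 < n)%N by apply: leq_trans hkn; apply: leq_trans hlk.
have r0 : 0 <= r.
  have := hr (Ordinal hn); rewrite /ball_count => /(leq_trans hl).
  case/card_gt0P => t; rewrite inE => /andP[_ h]; exact: le_trans (d0 _ _) h.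
rewrite /cover_cost.
apply: (big_ind (fun v => v <= 3%:R * r)).
- lra.
- by move=> a b ha hb; rewrite ge_max ha hb.
move=> p _; apply: (@ball_dS _ _ d _ P) => //.
case: (boolP [exists j : 'I_m, d (P p) (P (q j)) <= 2%:R * r]).
- case/existsP => j hj.
  set x := P (q j).
  set N := NN d P [set: 'I_n] x l.
  have NC : N \subset C := hCN j (ltn_ord j).
  have Nr : forall t, t \in N -> d x (P t) <= r.
    move=> t; rewrite inE => /andP[_ ht]; rewrite leNgt; apply/negP => hlt.
    move: ht; rewrite ltnNge => /negP; apply.
    apply: leq_trans (hr (q j)) _; apply: subset_leq_card.
    apply/subsetP => u; rewrite !inE => /andP[_ hu].
    by rewrite /nn_lt (le_lt_trans hu hlt).
  have Ncard : (l <= #|N|)%N.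
    rewrite leqNgt; apply/negP => hN.
    case: (pickP (fun a => a \notin N)) => [a0 a0N|allN]; last first.
      have : (#|[set: 'I_n]| <= #|N|)%N.
        by apply: subset_leq_card; apply/subsetP => a _; move: (allN a) => /= /negbFE.
      rewrite cardsT card_ord => hh; lia.
    have a0C : a0 \in ~: N by rewrite inE.
    have [s sN smin] := @min_elt _ (nn_lt d P x) _ (@nn_lt_trans _ _ d _ P x)
       (@nn_lt_irr _ _ d _ P x) _ a0C.
    move: sN; rewrite inE => /negP; apply.
    rewrite inE inE /=; apply: leq_ltn_trans hN; apply: subset_leq_card.
    apply/subsetP => u; rewrite inE => /andP[_ hu].
    have := smin u; rewrite inE; case: (u \in N) => //= /(_ isT); by rewrite hu.
  apply: (leq_trans Ncard); apply: subset_leq_card; apply/subsetP => t tN.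
  rewrite inE (subsetP NC _ tN) /=.
  apply: le_trans (dtri _ x _) _.
  have := Nr t tN; lra.
- rewrite negb_exists => /forallP hB; exfalso.
  have hB' : forall j, (j < m)%N -> 2%:R * r < d (P p) (P (q j)).
    by move=> j jm; have := hB (Ordinal jm); rewrite -ltNge.
  pose y i := if (i < m)%N then P (q i) else P p.
  have sep : forall i j, (i < j)%N -> (j <= m)%N -> 2%:R * r < d (y i) (y j).
    move=> i j ij jm.
    have im : (i < m)%N by apply: leq_trans ij jm.
    rewrite /y im.
    case: (ltnP j m) => jm'.
    - idtac.
      have jpos : (0 < j < m)%N by rewrite jm' (leq_ltn_trans (leq0n i) ij).
      have hg := hq j jpos p.
      have low : 2%:R * r < dist_prefix d P q j (P p).
        rewrite /dist_prefix; apply: (big_ind (fun v => 2%:R*r < v)).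
        + exact: hB' 0%N hm.
        + by move=> a b ha hb; rewrite lt_min ha hb.
        + by move=> k0 _; apply: hB'; exact: ltn_trans (ltn_ord k0) jm'.
      have up : dist_prefix d P q j (P (q j)) <= d (P (q j)) (P (q i)).
        rewrite /dist_prefix.
        exact: (@bigmin_le_seq _ _ _ _ (fun k0 : 'I_j => d (P (q j)) (P (q k0))) _ (Ordinal ij) (mem_index_enum _) isT).
      rewrite dsym; exact: lt_le_trans low (le_trans hg up).
    - idtac.
      rewrite dsym; exact: hB'.
  pose B i := [set t in C' | d (y i) (P t) <= r].
  have cardB : forall i, (l <= #|B i|)%N.
    move=> i; rewrite /B /y; case: ifP => _; [exact: hr (q i) | exact: hr p].
  have disj : forall i j, (i < j)%N -> (j <= m)%N -> forall t, t \in B i -> t \in B j -> False.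
    move=> i j ij jm t; rewrite !inE => /andP[_ h1] /andP[_ h2].
    have := sep i j ij jm; have := dtri (y i) (P t) (y j); rewrite (dsym (P t) (y j)).
    lra.
  have U : forall j, (j <= m.+1)%N -> #|\bigcup_(i < j) B i| = (\sum_(i < j) #|B i|)%N.
    elim => [|j IH] hj; first by rewrite !big_ord0 cards0.
    rewrite !big_ord_recr /= cardsU IH ?(ltnW hj) //.
    have -> : (\bigcup_(i < j) B i) :&: B j = set0.
      apply/setP => t; rewrite inE in_set0; apply/negP => /andP[/bigcupP[i _ ti] tj].
      exact: disj i j (ltn_ord i) hj t ti tj.
    by rewrite cards0 subn0.
  have sub : \bigcup_(i < m.+1) B i \subset C'.
    by apply/bigcupsP => i _; apply/subsetP => t; rewrite inE => /andP[].
  have le1 := subset_leq_card sub.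
  have le2 : (m.+1 * l <= \sum_(i < m.+1) #|B i|)%N.
    rewrite -[X in (X * l)%N]card_ord -sum_nat_const; apply: leq_sum => i _; exact: cardB.
  rewrite (U m.+1 (leqnn _)) hC' -hk in le1.
  have := leq_trans le2 le1; nia.
Qed.
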